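(* Let $\alpha\in(1,2)$, $\sigma:\mathbb{R}\to(0,\infty)$ continuous, and let $Y$ be the time-changed symmetric $\alpha$-stable process described in the context. If $$\delta_+:=\sup_{x>0}x^{\alpha-1}\int_x^\infty\sigma(z)^{-\alpha}dz<\infty,$$ then for every $x>0$, $$\mathrm{II}^+(\varphi)(x)\le\frac{4}{\Gamma(\alpha/2)^2(\alpha-1)}\delta_+,$$ where $\varphi(x)=x^{(\alpha-1)/2}$.
   Context: $X$ is the symmetric $\alpha$-stable process on $\mathbb{R}$ (generator $-(-\Delta)^{\alpha/2}$), and $Y_t=X_{\zeta_t}$ with $\zeta_t=\inf\{s>0:\int_0^s\sigma(X_u)^{-\alpha}du>t\}$. For a positive function $f$ on $(0,\infty)$ define $$\mathrm{II}^+(f)(x)=\frac{1}{\Gamma(\alpha/2)^2f(x)}\int_0^xz^{\alpha-2}\left(\int_z^\infty f(y)\sigma(y)^{-\alpha}dy\right)dz,\quad x>0$$ (an upper bound for $U^{(0,\infty)}f(x)/f(x)$, where $U^{(0,\infty)}f(x)=\mathbb{E}_x\int_0^{\tau_{(0,\infty)}}f(Y_t)dt$ and $\tau_{(0,\infty)}$ is the exit time of $Y$ from $(0,\infty)$). *)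

(* Defs.v *)
From HB Require Import structures.
From mathcomp Require Import all_boot all_order all_algebra.
From mathcomp Require Import all_classical all_reals all_analysis.
Set Implicit Arguments. Unset Strict Implicit. Unset Printing Implicit Defensive.
Import Order.TTheory GRing.Theory Num.Theory.
Import numFieldNormedType.Exports.
Local Open Scope classical_set_scope.
Local Open Scope ring_scope.
Local Open Scope ereal_scope.

Section Defs.
Variable R : realType.
Notation mu := (@lebesgue_measure R).

Definition Gamma (s : R) : R :=
  fine (\int[mu]_(t in `]0%R, +oo[) ((t `^ (s - 1)) * expR (- t))%:E).

Definition tail_int (sigma : R -> R) (alpha : R) (f : R -> R) (z : R) : \bar R :=
  \int[mu]_(y in `]z, +oo[) (f y * (sigma y) `^ (- alpha))%:E.

Definition II_plus (sigma : R -> R) (alpha : R) (f : R -> R) (x : R) : \bar R :=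
  ((Gamma (alpha / 2) ^+ 2 * f x)^-1)%:E *
  \int[mu]_(z in `]0%R, x[) ((z `^ (alpha - 2))%:E * tail_int sigma alpha f z).

Definition delta_plus (sigma : R -> R) (alpha : R) : \bar R :=
  ereal_sup [set ((x `^ (alpha - 1))%:E *
                  \int[mu]_(z in `]x, +oo[) ((sigma z) `^ (- alpha))%:E)
            | x in `]0%R, +oo[].

End Defs.

(* Main.v *)
Require Import Defs.
From HB Require Import structures.
From mathcomp Require Import all_boot all_order all_algebra.
From mathcomp Require Import all_classical all_reals all_analysis.
From mathcomp Require Import measurable_realfun.
From mathcomp Require Import lra ring.
Import Order.TTheory GRing.Theory Num.Theory.
Import numFieldNormedType.Exports.
Local Open Scope classical_set_scope.
Local Open Scope ring_scope.

Section A.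
Variable R : realType.
Local Notation mu := (@lebesgue_measure R).

Lemma bernoulli (r : R) n : 1 <= r -> 1 + n%:R * (r - 1) <= r ^+ n.
Proof.
move=> r1; elim: n => [|n IH]; first by rewrite mul0r addr0 expr0.
rewrite exprS -natr1.
have h : 0 <= r - 1 by rewrite subr_ge0.
have hn : 0 <= n%:R * (r - 1) by rewrite mulr_ge0.
nra.
Qed.

Lemma expr_unbounded (r M : R) : 1 < r -> exists n : nat, M <= r ^+ n.
Proof.
move=> r1.
have h : 0 < r - 1 by rewrite subr_gt0.
exists (Num.bound (`|M| / (r - 1))).
have := @bernoulli r (Num.bound (`|M| / (r - 1))) (ltW r1); apply: le_trans.
have := archi_boundP (divr_ge0 (normr_ge0 M) (ltW h)).
rewrite ltr_pdivrMr// => /ltW hb.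
apply: le_trans (ler_norm M) _.
apply: le_trans hb _; rewrite lerDr//.
Qed.

Lemma powRK (a b : R) : 0 <= a -> 0 < b -> (a `^ b) `^ (b^-1) = a.
Proof. by move=> a0 b0; rewrite -powRrM mulfV ?gt_eqF// powRr1. Qed.

Lemma powRKV (a b : R) : 0 <= a -> 0 < b -> (a `^ (b^-1)) `^ b = a.
Proof. by move=> a0 b0; rewrite -powRrM mulVf ?gt_eqF// powRr1. Qed.

Lemma powR_sq (a b : R) : (a `^ (b * 2)) = (a `^ b) ^+ 2.
Proof. by rewrite powRrM -powR_mulrn// powR_ge0. Qed.


Lemma powR_cont (p z : R) : 0 < z -> {for z, continuous (fun y : R => y `^ p)}.
Proof.
move=> z0; apply: differentiable_continuous; apply/derivable1_diffP.
by apply: derivable_powR; rewrite in_itv/= z0.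
Qed.

Lemma ftc_pow (a x c b : R) : 0 < a -> a < x -> 0 < b ->
  (\int[mu]_(z in `[a, x]) (c * z `^ (b - 1))%:E =
   (c / b * x `^ b)%:E - (c / b * a `^ b)%:E)%E.
Proof.
move=> a0 ax b0.
have hd (z : R) : 0 < z -> is_derive z 1 (fun z : R => c / b * z `^ b) (c * z `^ (b - 1)).
  move=> z0.
  have := @is_deriveZ _ _ _ (fun y : R => y `^ b) (c / b) z 1 _ (is_derive1_powR b z0).
  move=> H; apply: (is_derive_eq H).
  by rewrite /GRing.scale/= mulrA divfK ?gt_eqF.
apply: (@continuous_FTC2 _ (fun z : R => c * z `^ (b - 1)) (fun z : R => c / b * z `^ b)) => //.
- apply: continuous_in_subspaceT => z; rewrite inE/= in_itv/= => /andP[az _].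
  apply: (@continuousM _ _ (fun=> c) (fun y : R => y `^ (b - 1))); first exact: cst_continuous.
  by apply: powR_cont; exact: lt_le_trans az.
- split.
  + move=> z; rewrite in_itv/= => /andP[az _].
    have := hd z (lt_trans a0 az); by case.
  + apply: cvg_at_right_filter.
    by case: (hd a a0) => /derivable1_diffP/differentiable_continuous.
  + apply: cvg_at_left_filter.
    by case: (hd x (lt_trans a0 ax)) => /derivable1_diffP/differentiable_continuous.
- move=> z; rewrite in_itv/= => /andP[az _].
  by rewrite derive1E; apply: derive_val; apply: hd; exact: lt_trans az.
Qed.

Lemma mpow (c b : R) (D : set R) : measurable_fun D (fun z : R => EFin (c * z `^ b)).
Proof.
apply/measurable_EFinP; apply: measurable_funTS.
by apply: measurable_funM => //; exact: measurable_cst.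
Qed.

Lemma int_pow_le (x c b : R) : 0 < x -> 0 < b -> 0 <= c ->
  (\int[mu]_(z in `]0%R, x[) (c * z `^ (b - 1))%:E <= (c / b * x `^ b)%:E)%E.
Proof.
move=> x0 b0 c0.
pose F := fun n : nat => `[x / n.+2%:R, x[%classic.
have Fu : \bigcup_n F n = `]0, x[%classic.
  apply/seteqP; split => z /=.
    move=> [n _]; rewrite /F/= !in_itv/= => /andP[h1 ->]; rewrite andbT.
    by apply: lt_le_trans h1; rewrite divr_gt0.
  rewrite in_itv/= => /andP[z0 zx].
  have [n hn] : exists n : nat, x / z < n.+2%:R.
    exists (Num.bound (x / z)).
    apply: lt_le_trans (archi_boundP _) _; first by rewrite divr_ge0// ltW.
    by rewrite ler_nat; apply: leq_trans (leqnSn _) (leqnSn _).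
  exists n => //; rewrite /F/= in_itv/= zx andbT.
  by rewrite ler_pdivrMr// mulrC -ler_pdivrMr// ltW.
have nd : nondecreasing_seq F.
  move=> n m nm; apply/subsetPset; rewrite /F => z /=; rewrite !in_itv/= => /andP[h ->].
  rewrite andbT; apply: le_trans h; rewrite ler_pM2l// lef_pV2 ?posrE// ler_nat.
  by rewrite !ltnS.
have mF n : measurable (F n) by exact: measurable_itv.
have := @ge0_nondecreasing_set_cvg_integral _ (measurableTypeR R) R F (fun z => EFin (c * z `^ (b - 1))) (@lebesgue_measure R) nd mF
  (fun i => mpow _ _ _) (fun i z _ => ltac:(by rewrite (lee_fin 0) mulr_ge0// powR_ge0)).
rewrite Fu => hc. rewrite -(cvg_lim _ hc)//.
apply: lime_le; first by apply/cvg_ex; eexists; exact: hc.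
apply: nearW => n; rewrite /F.
have a0 : 0 < x / n.+2%:R by rewrite divr_gt0.
have ax : x / n.+2%:R < x by rewrite ltr_pdivrMr// ltr_pMr// ltr1n.
rewrite integral_itv_bndo_bndc; last exact: mpow.
rewrite ftc_pow// lee_fin lerBlDr lerDl.
by apply: mulr_ge0; [rewrite divr_ge0 // ltW | exact: powR_ge0].
Qed.

Local Open Scope ereal_scope.
Lemma le_int_nm (D : set R) (f g : R -> \bar R) :
  (forall x, D x -> 0 <= f x) -> (forall x, D x -> f x <= g x) ->
  \int[mu]_(x in D) f x <= \int[mu]_(x in D) g x.
Proof.
move=> f0 fg.
have g0 : forall x, D x -> 0 <= g x by move=> x Dx; exact: le_trans (f0 _ Dx) (fg _ Dx).
rewrite (ge0_integralE mu f0) (ge0_integralE mu g0).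
apply: ereal_sup_le => _ [h /= hf <-]; exists h => //= x.
apply: le_trans (hf x) _.
rewrite /patch; case: ifPn => // /set_mem Dx; exact: fg.
Qed.

Local Close Scope ereal_scope.
End A.

Section B.
Variable R : realType.
Local Notation mu := (@lebesgue_measure R).
Variables (alpha d : R) (sigma : R -> R).
Hypothesis a1 : 1 < alpha.
Hypothesis a2 : alpha < 2.
Hypothesis csig : continuous sigma.
Hypothesis spos : forall y, 0 < sigma y.
Hypothesis d0 : 0 <= d.
Hypothesis HS : forall t, 0 < t ->
  ((t `^ (alpha - 1))%:E * \int[mu]_(y in `]t, +oo[) ((sigma y) `^ (- alpha))%:E <= d%:E)%E.

Let s y := sigma y `^ (- alpha).
Let beta := (alpha - 1) / 2.

Let beta0 : 0 < beta.
Proof. by rewrite /beta divr_gt0// subr_gt0. Qed.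

Let ab : alpha - 1 = beta * 2.
Proof. by rewrite /beta divfK// pnatr_eq0. Qed.

Let s0 y : 0 <= s y.
Proof. exact: powR_ge0. Qed.

Let ms (D : set R) : measurable_fun D s.
Proof.
apply: measurable_funTS.
have := measurableT_comp (@measurable_powR R (- alpha)) (continuous_measurable_fun csig).
by [].
Qed.

Lemma Sbound t : 0 < t ->
  (\int[mu]_(y in `]t, +oo[) (s y)%:E <= (d / t `^ (alpha - 1))%:E)%E.
Proof.
move=> t0; have p0 : 0 < t `^ (alpha - 1) by rewrite powR_gt0.
by rewrite mulrC EFinM lee_pdivlMl// HS.
Qed.


Lemma key z r : 0 < z -> 1 < r ->
  (tail_int sigma alpha (fun y : R => (y `^ ((alpha - 1) / 2))%R) z <=
   (d / z `^ beta * (1 + r))%R%:E)%E.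
Proof.
move=> z0 r1.
have r0 : 0 < r by apply: lt_trans r1.
set w := z `^ beta.
have w0 : 0 < w by rewrite powR_gt0.
pose e j := if j is j'.+1 then w * r ^+ j' * (r - 1) else w.
pose v j := if j is j'.+1 then w * r ^+ j' else w.
pose u j := (v j) `^ (beta^-1).
pose b j := if j is j'.+1 then d / w * (r - 1) * (r^-1) ^+ j' else d / w.
have e0 j : 0 <= e j.
  rewrite /e; case: j => [|j]; first exact: ltW.
  apply: mulr_ge0; last by rewrite subr_ge0 ltW.
  by apply: mulr_ge0; [exact: ltW| apply: exprn_ge0; exact: ltW].
have v0 j : 0 < v j by rewrite /v; case: j => [|j] //; rewrite mulr_gt0// exprn_gt0.
have vw j : w <= v j.
  rewrite /v; case: j => [|j] //; rewrite ler_peMr //; last exact (exprn_ege1 j (ltW r1)). exact: ltW.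
have uv j : (u j) `^ beta = v j by rewrite /u powRKV// ltW.
have uz j : z <= u j.
  have -> : z = w `^ (beta^-1) by rewrite /w powRK// ltW.
  by rewrite /u ge0_ler_powR// ?invr_ge0 ?ltW// nnegrE ltW.
have u0 j : 0 < u j by apply: lt_le_trans (uz j).
pose f j := (fun y => (e j * s y)%:E) \_ `]u j, +oo[.
have f0 j y : (0 <= f j y)%E.
  by rewrite /f /patch; case: ifP => // _; rewrite lee_fin mulr_ge0.
have mf j : measurable_fun `]z, +oo[ (f j).
  apply: measurable_funTS; apply/(measurable_restrictT _ _).1 => //.
  by apply/measurable_EFinP; apply: measurable_funM => //; exact: measurable_cst.
have intf j : (\int[mu]_(y in `]z, +oo[) f j y =
    (e j)%:E * \int[mu]_(y in `]u j, +oo[) (s y)%:E)%E.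
  rewrite /f -integral_mkcondr.
  have -> : `]z, +oo[%classic `&` `]u j, +oo[%classic = `]u j, +oo[%classic.
    apply/setIidr => y /=; rewrite !in_itv/= !andbT => h.
    exact: le_lt_trans (uz j) h.
  under eq_integral do rewrite EFinM.
  rewrite ge0_integralZl_EFin//; [move=> y _; rewrite lee_fin; exact: s0|apply/measurable_EFinP; exact: ms].
have intb j : ((e j)%:E * \int[mu]_(y in `]u j, +oo[) (s y)%:E <= (b j)%:E)%E.
  have := @lee_wpmul2l _ (e j)%:E (ltac:(by rewrite lee_fin)) _ _ (@Sbound (u j) (u0 j)).
  move/le_trans; apply.
  rewrite -EFinM lee_fin ab powR_sq uv.
  have vn : v j != 0 by rewrite gt_eqF.
  case: j vn => [|j] /= vn.
    by rewrite le_eqVlt; apply/orP; left; apply/eqP; field; rewrite gt_eqF.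
  rewrite le_eqVlt; apply/orP; left; apply/eqP; rewrite exprVn.
  have rj : r ^+ j != 0 by rewrite expf_neq0// gt_eqF.
  by field; rewrite rj gt_eqF.
have pw y : z < y -> ((y `^ beta * s y)%:E <= \sum_(j <oo) f j y)%E.
  move=> zy.
  have y0 : 0 < y by apply: lt_trans zy.
  have wy : w < y `^ beta by rewrite /w gt0_ltr_powR// nnegrE ltW.
  have exP : exists n, y `^ beta <= w * r ^+ n.
    have [n hn] := @expr_unbounded R r (y `^ beta / w) r1.
    by exists n; rewrite mulrC -ler_pdivrMr.
  case: (ex_minnP exP) => n Pn nmin.
  case: n Pn nmin => [|k] Pn nmin.
    by move: Pn; rewrite expr0 mulr1 leNgt wy.
  have nPk : w * r ^+ k < y `^ beta.
    by rewrite ltNge; apply/negP => /nmin; rewrite ltnn.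
  apply: le_trans (@nneseries_lim_ge _ (fun j => f j y) xpredT 0 k.+2 _); last first.
    by move=> *; exact: f0.
  have fi i : (i < k.+2)%N -> f i y = (e i * s y)%:E.
    move=> ik; rewrite /f /patch ifT// inE/= in_itv/= andbT.
    have vy : v i < y `^ beta.
      rewrite /v; case: i ik => [|i] ik //.
      apply: le_lt_trans nPk; apply: ler_wpM2l; first exact: ltW.
      by rewrite ler_eXn2l// -ltnS.
    have := gt0_ltr_powR (ltac:(by rewrite invr_gt0) : 0 < beta^-1) (ltW (v0 i)) (powR_ge0 y beta) vy.
    by rewrite (@powRK R)// ltW.
  rewrite big_nat_cond (eq_bigr (fun i => (e i * s y)%:E)); last first.
    by move=> i /andP[/andP[_ ik] _]; exact: fi.
  rewrite -big_nat_cond sumEFin -big_distrl /= lee_fin.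
  apply: ler_wpM2r; first exact: s0.
  apply: (le_trans Pn); rewrite le_eqVlt; apply/orP; left; apply/eqP.
  rewrite big_nat_recl// /e /=.
  have -> : \sum_(0 <= i < k.+1) w * r ^+ i * (r - 1) = w * (r ^+ k.+1 - 1).
    rewrite subrX1 big_mkord mulrA mulr_sumr.
    by apply: eq_bigr => i _; ring.
  by ring.
rewrite /tail_int.
apply: (@le_trans _ _ (\int[mu]_(y in `]z, +oo[) \sum_(j <oo) f j y)%E).
  apply: le_int_nm.
    by move=> y _; rewrite lee_fin mulr_ge0// powR_ge0.
  by move=> y; rewrite /= in_itv/= andbT => zy; exact: pw.
rewrite integral_nneseries; try by [].
have b0 j : 0 <= b j.
  rewrite /b; case: j => [|j]; first by rewrite divr_ge0// ltW.
  apply: mulr_ge0; last by apply: exprn_ge0; rewrite invr_ge0 ltW.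
  apply: mulr_ge0; last by rewrite subr_ge0 ltW.
  by rewrite divr_ge0// ltW.
apply: (@le_trans _ _ (\sum_(j <oo) (b j)%:E)%E).
  apply: lee_nneseries.
    by move=> i _ _; apply: integral_ge0 => y _; exact: f0.
  by move=> n _; rewrite intf; exact: intb.
apply: lime_le.
  by apply: is_cvg_nneseries => n _ _; rewrite lee_fin.
apply: nearW => n; case: n => [|m].
  rewrite big_geq// lee_fin; apply: mulr_ge0; first by rewrite divr_ge0// ltW.
  by apply: addr_ge0; exact: ltW.
rewrite big_nat_recl// sumEFin -EFinD lee_fin /b /=.
have rV : `|r^-1| < 1 by rewrite ger0_norm ?invr_ge0 ?ltW// invf_lt1.
have := @geometric_le_lim R m (d / w * (r - 1)) r^-1 _ _ rV.
rewrite /series /geometric /=.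
have h1 : 0 <= d / w * (r - 1).
  by apply: mulr_ge0; [rewrite divr_ge0// ltW | rewrite subr_ge0 ltW].
move=> /(_ h1 (ltac:(by rewrite invr_gt0))) H.
rewrite [X in _ <= X]mulrDr mulr1 lerD2l; apply: (le_trans H).
have -> : d / w * (r - 1) / (1 - r^-1) = d / w * r.
  have r1' : 1 - r^-1 != 0.
    by rewrite subr_eq0 eq_sym invr_eq1 gt_eqF.
  field; rewrite !gt_eqF// subr_gt0.
by []. by rewrite lexx.
Qed.

Lemma key2 z : 0 < z ->
  (tail_int sigma alpha (fun y : R => (y `^ ((alpha - 1) / 2))%R) z <=
   (d / z `^ beta * 2)%R%:E)%E.
Proof.
move=> z0; set w := z `^ beta.
have w0 : 0 < w by rewrite powR_gt0.
have dw : 0 <= d / w by rewrite divr_ge0// ltW.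
apply/lee_addgt0Pr => e e0.
have q0 : 0 < e / (d / w + 1) by rewrite divr_gt0// ltr_wpDl.
have := @key z (1 + e / (d / w + 1)) z0 (ltac:(by rewrite ltrDl)).
move/le_trans; apply; rewrite -EFinD lee_fin.
have -> : d / w * (1 + (1 + e / (d / w + 1))) = d / w * 2 + e * (d / w / (d / w + 1)).
  have dwp : 0 < d + w by have := ltr_wpDl d0 w0.
  by field; rewrite !gt_eqF.
rewrite lerD2l ger_pMr// ler_pdivrMr ?ltr_wpDl// mul1r lerDl//.
Qed.

Lemma main x : 0 < x ->
  (II_plus sigma alpha (fun y : R => (y `^ ((alpha - 1) / 2))%R) x <=
   (4 / (Gamma (alpha / 2) ^+ 2 * (alpha - 1)))%R%:E * d%:E)%E.
Proof.
move=> x0; rewrite /II_plus.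
set G := Gamma (alpha / 2) ^+ 2.
have G0 : 0 <= G by rewrite /G exprn_even_ge0.
have [G00|Gp] := eqVneq G 0.
  by rewrite G00 !mul0r invr0 mulr0 !mul0e.
have Gpos : 0 < G by rewrite lt_neqAle eq_sym Gp.
have xb : 0 < x `^ beta by rewrite powR_gt0.
apply: (@le_trans _ _ (((G * x `^ beta)^-1)%:E *
   \int[mu]_(z in `]0%R, x[) ((2 * d) * z `^ (beta - 1))%:E)%E).
  apply: lee_wpmul2l; first by rewrite lee_fin invr_ge0 mulr_ge0// ltW.
  apply: le_int_nm.
    move=> z _; apply: mule_ge0; first by rewrite lee_fin powR_ge0.
    by apply: integral_ge0 => y _; rewrite lee_fin mulr_ge0// powR_ge0.
  move=> z; rewrite /= in_itv/= => /andP[z0 _].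
  have := @lee_wpmul2l _ (z `^ (alpha - 2))%:E (ltac:(by rewrite lee_fin powR_ge0)) _ _ (@key2 z z0).
  move/le_trans; apply.
  rewrite -EFinM lee_fin.
  have -> : alpha - 2 = (beta - 1) + beta by rewrite /beta; field.
  rewrite powRD; last by apply/implyP => _; rewrite gt_eqF.
  have zb : z `^ beta != 0 by rewrite gt_eqF// powR_gt0.
  rewrite le_eqVlt; apply/orP; left; apply/eqP; field; exact: zb.
have c0 : 0 <= 2 * d by rewrite mulr_ge0.
have := @lee_wpmul2l _ ((G * x `^ beta)^-1)%:E
  (ltac:(by rewrite lee_fin invr_ge0 mulr_ge0// ltW)) _ _ (@int_pow_le R x (2 * d) beta x0 beta0 c0).
move/le_trans; apply.
rewrite -!EFinM lee_fin.
rewrite le_eqVlt; apply/orP; left; apply/eqP.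
have am : alpha - 1 != 0 by rewrite subr_eq0 gt_eqF.
rewrite /beta; field.
by rewrite Gp am gt_eqF.
Qed.

End B.

Theorem lemma3p4 (R : realType) (alpha : R) (sigma : R -> R) :
  1 < alpha -> alpha < 2 ->
  continuous sigma ->
  (forall y, 0 < sigma y) ->
  (delta_plus sigma alpha < +oo)%E ->
  forall x : R, 0 < x ->
    (II_plus sigma alpha (fun y : R => (y `^ ((alpha - 1) / 2))%R) x <=
     (4 / (Gamma (alpha / 2) ^+ 2 * (alpha - 1)))%:E * delta_plus sigma alpha)%E.
Proof.
move=> a1 a2 cs sp hd x x0.
have dge0 : (0 <= delta_plus sigma alpha)%E.
  apply: le_ereal_sup_tmp; exists ((1 `^ (alpha - 1))%:E *
     \int[(@lebesgue_measure R)]_(z in `]1%R, +oo[) ((sigma z) `^ (- alpha))%:E)%E.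
    by exists 1%R => //; rewrite /= in_itv/= andbT.
  apply: mule_ge0; first by rewrite lee_fin powR_ge0.
  by apply: integral_ge0 => y _; rewrite lee_fin powR_ge0.
have fd : delta_plus sigma alpha \is a fin_num by rewrite ge0_fin_numE.
rewrite -(fineK fd).
apply: main => //.
- by rewrite -lee_fin fineK.
- move=> t t0; rewrite fineK//; apply: ereal_sup_ubound.
  by exists t => //; rewrite /= in_itv/= andbT.
Qed.
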